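(* Let $(\xi,Q)$ be an RQSE random overlap structure such that $\overline{S_Q}$ has no limit points from below (for every $q\in\overline{S_Q}$, $\sup\{p\in\overline{S_Q}:p<q\}<q$), and let $\nu$ be a random measure directing $(\xi,Q)$. Then almost surely the support of $\nu$ is countable.
   Context: A random overlap structure (ROSt) is a random pair $(\xi,Q)$ with $\xi=(\xi_1\ge\xi_2\ge\cdots\ge0)$, $\sum\xi_i\le1$, and $Q=(q_{ij})$ a symmetric positive semidefinite $\mathbb{N}\times\mathbb{N}$ matrix with $q_{ii}=1$. $S_Q=\{q_{ij}:i\ne j\}$; $Q^{*r}=(q_{ij}^r)$. For $r\in\mathbb{N}$, $\lambda>0$, the map $\Phi_{r,\lambda}$: conditionally on $(\xi,Q)$ let $(\kappa_i)$ be centered Gaussian with covariance $Q^{*r}$, set $\xi'_i=\xi_ie^{\lambda\kappa_i}/\sum_j\xi_je^{\lambda\kappa_j}$ ($\xi'\equiv0$ if $\xi\equiv0$), let $\pi$ order $\xi'$ non-increasingly (ties by original index), and output $((\xi'_{\pi(i)}),(q_{\pi(i)\pi(j)}))$. The ROSt is RQSE if its law is invariant under all $\Phi_{r,\lambda}$ ($r\in\mathbb{N},\lambda>0$), is ergodic (extremal among laws invariant under these maps), and $S_Q\subseteq(-1,1)$. A random Borel probability measure $\nu$ on a separable Hilbert space $\mathcal{H}$ directs $(\xi,Q)$ if, conditionally on $\nu$, $Q$ has the law of $\big((\phi_i,\phi_j)+\delta_{ij}(1-\|\phi_i\|^2)\big)_{i,j}$ where $(\phi_i)$ is i.i.d.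 with law $\nu$. *)

(* Defs.v *)
From HB Require Import structures.
From mathcomp Require Import all_boot all_order all_algebra.
From mathcomp Require Import all_classical all_reals all_analysis.
From mathcomp Require Import measurable_realfun.
Set Implicit Arguments. Unset Strict Implicit. Unset Printing Implicit Defensive.
Import Order.TTheory GRing.Theory Num.Theory.
Import numFieldNormedType.Exports.
Local Open Scope classical_set_scope.
Local Open Scope ring_scope.

Section Defs.
Variable R : realType.

(* configuration (xi, Q) *)
Definition Conf := ((nat -> R) * (nat -> nat -> R))%type.

Definition conf_gen : set (set Conf) :=
  [set A | (exists i (B : set R), measurable B /\ A = (fun c : Conf => c.1 i) @^-1` B)
        \/ (exists i j (B : set R), measurable B /\ A = (fun c : Conf => c.2 i j) @^-1` B)].

Definition ConfM := g_sigma_algebraType conf_gen.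

Definition rost_valid (c : Conf) : Prop :=
  (forall i, 0 <= c.1 i) /\ (forall i, c.1 i.+1 <= c.1 i) /\
  (forall n, \sum_(i < n) c.1 i <= 1) /\
  (forall i j, c.2 i j = c.2 j i) /\ (forall i, c.2 i i = 1) /\
  (forall n (t : nat -> R), 0 <= \sum_(i < n) \sum_(j < n) t i * t j * c.2 i j).

Definition reweight (lam : R) (c : Conf) (kappa : nat -> R) : nat -> R :=
  if `[< forall i, c.1 i = 0 >] then (fun _ => 0)
  else (fun i => c.1 i * expR (lam * kappa i) /
                 fine (\sum_(j <oo) (c.1 j * expR (lam * kappa j))%:E)%E).

Definition prec (x : nat -> R) (j k : nat) : Prop :=
  x k < x j \/ (x j = x k /\ (j < k)%N).

Definition sortperm (x : nat -> R) (i : nat) : nat :=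
  xget 0%N [set j | @counting nat R [set k | prec x k j] = (i%:R)%:E].

Definition Phi (r : nat) (lam : R) (c : Conf) (kappa : nat -> R) : Conf :=
  let x := reweight lam c kappa in
  let p := sortperm x in
  ((fun i => x (p i)), (fun i j => c.2 (p i) (p j))).

Local Open Scope ereal_scope.

(* Conditionally on C, K is a centered Gaussian sequence with covariance
   matrix (C.2)^{*r}: characterised via conditional characteristic functions
   of all finite-dimensional marginals. *)
Definition cond_gaussian (r : nat) d (Om : measurableType d)
    (P : probability Om R) (C : Om -> ConfM) (K : Om -> nat -> R) : Prop :=
  forall (n : nat) (t : nat -> R) (B : set ConfM), measurable B ->
    (\int[P]_(w in C @^-1` B) (cos (\sum_(k < n) t k * K w k))%:E
     = \int[P]_(w in C @^-1` B)
         (expR (- (\sum_(j < n) \sum_(k < n) t j * t k * ((C w).2 j k) ^+ r) / 2))%:E)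
    /\ \int[P]_(w in C @^-1` B) (sin (\sum_(k < n) t k * K w k))%:E = 0.

Definition Phi_invariant (r : nat) (lam : R) (mu : probability ConfM R) : Prop :=
  forall d (Om : measurableType d) (P : probability Om R)
         (C : Om -> ConfM) (K : Om -> nat -> R),
    measurable_fun setT C ->
    (forall k, measurable_fun setT (fun w => K w k)) ->
    (forall B : set ConfM, measurable B -> P (C @^-1` B) = mu B) ->
    cond_gaussian r P C K ->
    forall B : set ConfM, measurable B ->
      P ((fun w => (Phi r lam (C w) (K w) : ConfM)) @^-1` B) = mu B.

Definition all_invariant (mu : probability ConfM R) : Prop :=
  forall (r : nat) (lam : R), (0 < r)%N -> (0 < lam)%R -> Phi_invariant r lam mu.

(* extremal among the laws invariant under all the maps Phi_{r,lam} *)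
Definition ergodic (mu : probability ConfM R) : Prop :=
  forall (mu1 mu2 : probability ConfM R) (s : R),
    all_invariant mu1 -> all_invariant mu2 -> (0 < s < 1)%R ->
    (forall B : set ConfM, measurable B -> mu B = s%:E * mu1 B + (1 - s)%:E * mu2 B) ->
    forall B : set ConfM, measurable B -> mu1 B = mu B.

Definition SQ (Q : nat -> nat -> R) : set R :=
  [set x | exists i j, i <> j /\ x = Q i j].

Definition RQSE (mu : probability ConfM R) : Prop :=
  all_invariant mu /\ ergodic mu /\
  {ae mu, forall c : ConfM, SQ c.2 `<=` [set x : R | (-1 < x < 1)%R]}.

Definition no_limit_from_below (S : set R) : Prop :=
  forall q, S q -> exists2 p, (p < q)%R & forall x, S x -> (x < q)%R -> (x <= p)%R.

End Defs.

Definition is_inner_product (R : realType) (H : normedModType R)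
  (ip : H -> H -> R) : Prop :=
  (forall x y, ip x y = ip y x) /\
  (forall (a : R) (x y z : H), ip (a *: x + y) z = (a * ip x z + ip y z)%R) /\
  (forall x, ip x x = (`|x| ^+ 2)%R).

Definition separable (T : topologicalType) : Prop :=
  exists D : set T, countable D /\ closure D = setT.

Definition Borel (T : topologicalType) := g_sigma_algebraType (@open T).

Section Directing.
Variables (R : realType) (H : completeNormedModType R) (ip : H -> H -> R).

Definition gram_entry (phi : nat -> H) (i j : nat) : R :=
  (ip (phi i) (phi j) + (if i == j then 1 - `|phi i| ^+ 2 else 0))%R.

Definition cons_seq (x : H) (phi : nat -> H) : nat -> H :=
  fun k => if k is k'.+1 then phi k' else x.

(* iter_int m n g = int m(dx_0) ... int m(dx_{n-1}) g(x_0,...,x_{n-1},...) *)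
Fixpoint iter_int (m : probability (Borel H) R) (n : nat)
  (g : (nat -> H) -> \bar R) : \bar R :=
  match n with
  | 0 => g (fun _ => point)
  | n'.+1 => \int[m]_(x in setT) iter_int m n' (fun phi => g (cons_seq x phi))
  end.

(* probability that the top-left n x n block of the Gram-type matrix built from
   i.i.d. m-samples lies in the box prod_{i,j<n} B i j *)
Definition gram_box_prob (m : probability (Borel H) R) (n : nat)
  (B : nat -> nat -> set R) : \bar R :=
  iter_int m n (fun phi =>
    (\1_[set phi' : nat -> H | forall i j, (i < n)%N -> (j < n)%N ->
                                  B i j (gram_entry phi' i j)] phi)%:E).

(* nu directs (xi, Q): conditionally on nu, Q has the law of the Gram-type matrix *)
Definition directs d (Om : measurableType d) (P : probability Om R)
  (nu : Om -> probability (Borel H) R) (X : Om -> ConfM R) : Prop :=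
  forall (n : nat) (B : nat -> nat -> set R) (E : set Om),
    (forall i j, measurable (B i j)) ->
    <<s [set (fun w => nu w A) @^-1` D | A in measurable & D in (measurable : set (set (\bar R)))] >> E ->
    P (E `&` [set w | forall i j, (i < n)%N -> (j < n)%N -> B i j ((X w).2 i j)])
    = (\int[P]_(w in E) gram_box_prob (nu w) n B)%E.

Definition measure_support (m : probability (Borel H) R) : set H :=
  [set x | forall U : set H, open U -> U x -> (0 < m U)%E].

End Directing.

(* Main.v *)
Require Import Defs.
From HB Require Import structures.
From mathcomp Require Import all_boot all_order all_algebra.
From mathcomp Require Import all_classical all_reals all_analysis.
From mathcomp Require Import measurable_realfun.
From mathcomp Require Import ring lra.
Import Order.TTheory GRing.Theory Num.Theory.
Import numFieldNormedType.Exports.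
Local Open Scope classical_set_scope.
Local Open Scope ring_scope.

Section IP.
Variables (R : realType) (H : completeNormedModType R) (ip : H -> H -> R).
Hypothesis hip : is_inner_product ip.

Lemma ipC x y : ip x y = ip y x. Proof. by case: hip. Qed.
Lemma ipxx x : ip x x = `|x| ^+ 2. Proof. by case: hip => _ []. Qed.
Lemma ipZDl a x y z : ip (a *: x + y) z = a * ip x z + ip y z.
Proof. by case: hip => _ []. Qed.
Lemma ipDl x y z : ip (x + y) z = ip x z + ip y z.
Proof. by have := ipZDl 1 x y z; rewrite scale1r mul1r. Qed.
Lemma ipNl x z : ip (- x) z = - ip x z.
Proof.
have := ipZDl (-1) x 0 z; rewrite addr0 scaleN1r => ->.
have := ipDl 0 0 z; rewrite addr0 => h.
have -> : ip 0 z = 0 by lra.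
by rewrite addr0 mulN1r.
Qed.
Lemma ipBl x y z : ip (x - y) z = ip x z - ip y z.
Proof. by rewrite ipDl ipNl. Qed.
Lemma ipBr x y z : ip z (x - y) = ip z x - ip z y.
Proof. by rewrite ipC ipBl ipC (ipC y). Qed.
Lemma ipDr x y z : ip z (x + y) = ip z x + ip z y.
Proof. by rewrite ipC ipDl ipC (ipC y). Qed.

Lemma normD2 x y : `|x + y| ^+ 2 = `|x| ^+ 2 + 2 * ip x y + `|y| ^+ 2.
Proof. by rewrite -!ipxx ipDl !ipDr (ipC y x); ring. Qed.
Lemma normB2 x y : `|x - y| ^+ 2 = `|x| ^+ 2 - 2 * ip x y + `|y| ^+ 2.
Proof. by rewrite -!ipxx ipBl !ipBr (ipC y x); ring. Qed.

Lemma ip_le x y : ip x y <= `|x| * `|y|.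
Proof.
have h := normD2 x y.
have t : `|x + y| <= `|x| + `|y| := ler_normD x y.
have p : 0 <= `|x + y| := normr_ge0 _.
have : `|x + y| ^+ 2 <= (`|x| + `|y|) ^+ 2 by rewrite lerXn2r// nnegrE addr_ge0.
rewrite h; nra.
Qed.

Lemma CS x y : `|ip x y| <= `|x| * `|y|.
Proof.
rewrite ler_norml ip_le andbT.
have := ip_le (- x) y; rewrite ipNl normrN; lra.
Qed.

Lemma ip_cont x y t : 0 < t -> exists2 eta, 0 < eta &
  forall u v, `|u - x| < eta -> `|v - y| < eta -> `|ip u v - ip x y| < t.
Proof.
move=> t0; set M := `|x| + `|y| + 2.
have M0 : 0 < M by rewrite /M; have := normr_ge0 x; have := normr_ge0 y; lra.
exists (Num.min 1 (t / M)).
  by rewrite lt_min ltr01 divr_gt0.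
move=> u v hu hv.
have e1 : Num.min 1 (t / M) <= 1 by rewrite ge_min lexx.
have e2 : Num.min 1 (t / M) * M <= t.
  by rewrite -ler_pdivlMr // ge_min lexx orbT.
have -> : ip u v - ip x y = ip (u - x) v + ip x (v - y).
  by rewrite ipBl ipBr; ring.
apply: (le_lt_trans (ler_normD _ _)).
have c1 := CS (u - x) v; have c2 := CS x (v - y).
have nv : `|v| <= `|y| + `|v - y|.
  by have := ler_normD y (v - y); rewrite addrC subrK addrC.
set e := Num.min 1 (t / M) in e1 e2 hu hv.
have nx := normr_ge0 x; have ny := normr_ge0 y.
have n1 := normr_ge0 (u - x); have n2 := normr_ge0 (v - y).
rewrite /M in e2.
nra.
Qed.

Lemma small_inv (eta : R) : 0 < eta -> exists n : nat, (n.+1%:R)^-1 < eta.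
Proof.
move=> e0; exists (Num.truncn eta^-1).
by rewrite invf_plt ?posrE // ?truncnS_gt // ltr0Sn.
Qed.

Lemma closure_approx (S : set R) r :
  (forall e, 0 < e -> exists s, S s /\ `|r - s| < e) -> closure S r.
Proof.
move=> h B /nbhs_ballP [e e0 eB]; have [s [Ss rs]] := h e e0.
by exists s; split => //; apply: eB; rewrite -ball_normE.
Qed.

Lemma gap (C : set R) q : no_limit_from_below C -> C q ->
  exists2 g, 0 < g & forall c, C c -> `|c - q| < g -> q <= c.
Proof.
move=> nl Cq; have [p pq hp] := nl q Cq; exists (q - p); first by rewrite subr_gt0.
move=> c Cc; rewrite ltr_norml => /andP[h1 h2].
rewrite leNgt; apply/negP => cq; have := hp c Cc cq; lra.
Qed.

Lemma sep_eq x y : ip x x <= ip x y -> ip y y <= ip y x -> x = y.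
Proof.
move=> h1 h2; rewrite (ipC y x) in h2; have := normB2 x y; rewrite -!ipxx => h.
have : `|x - y| ^+ 2 <= 0 by rewrite -ipxx h; lra.
rewrite (@le_eqVlt _ _ _ 0) ltNge sqr_ge0 orbF expf_eq0 /= normr_eq0 subr_eq0.
by move/eqP.
Qed.

Lemma det (m : probability (Borel H) R) (S : set R) (e : nat -> H) :
  (forall x eps, 0 < eps -> exists i, `|x - e i| < eps) ->
  (forall x y, measure_support m x -> measure_support m y -> closure S (ip x y)) ->
  no_limit_from_below (closure S) -> countable (measure_support m).
Proof.
move=> de hS nl; set M := measure_support m.
pose P x eta := forall y, M y -> `|y - x| < eta -> ip x x <= ip x y.
pose A n := [set x | M x /\ exists2 eta, (n.+1%:R)^-1 < eta & P x eta].
have cov : M `<=` \bigcup_(n in setT) A n.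
  move=> x Mx; have [g g0 hg] := gap _ _ nl (hS x x Mx Mx).
  have [eta eta0 heta] := ip_cont x x g g0.
  have [n hn] := small_inv eta eta0.
  exists n => //; split => //; exists eta => // y My yx.
  apply: hg; first exact: hS.
  by apply: heta => //; rewrite subrr normr0.
have sepA n x y : A n x -> A n y -> `|x - y| < (n.+1%:R)^-1 -> x = y.
  move=> [Mx [ex hex Px]] [My [ey hey Py]] xy; apply: sep_eq.
    by apply: Px => //; rewrite distrC; exact: lt_trans hex.
  by apply: Py => //; exact: lt_trans hey.
apply: (sub_countable (subset_card_le cov)); apply: bigcup_countable => // n _.
apply/countable_injP.
pose r : R := (n.+1%:R)^-1 / 2.
have r0 : 0 < r by rewrite divr_gt0 // invr_gt0 ltr0Sn.
exists (fun x => xget 0%N [set i | `|x - e i| < r]).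
move=> x y /set_mem Ax /set_mem Ay hxy; apply: (sepA n) => //.
have hx : `|x - e (xget 0%N [set i | `|x - e i| < r])| < r.
  by apply: (@xgetPex _ 0%N [set i | `|x - e i| < r]); exact: de.
have hy : `|y - e (xget 0%N [set i | `|y - e i| < r])| < r.
  by apply: (@xgetPex _ 0%N [set i | `|y - e i| < r]); exact: de.
rewrite -hxy in hy.
have := ler_normD (x - e (xget 0%N [set i | `|x - e i| < r])) (e (xget 0%N [set i | `|x - e i| < r]) - y).
rewrite addrA subrK => h; apply: (le_lt_trans h).
rewrite distrC in hy; move: hx hy h; rewrite /r; set s := (n.+1%:R)^-1; lra.
Qed.

Definition good (m : probability (Borel H) R) (Q : nat -> nat -> R) (e : nat -> H)
  (i j k l : nat) : Prop :=
  (forall u v, ball (e i) (k.+1%:R^-1) u -> ball (e j) (k.+1%:R^-1) v ->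
     ball (ip (e i) (e j)) (l.+1%:R^-1) (ip u v)) ->
  (0 < m (ball (e i) (k.+1%:R^-1)))%E -> (0 < m (ball (e j) (k.+1%:R^-1)))%E ->
  exists s, SQ Q s /\ ball (ip (e i) (e j)) (l.+1%:R^-1) s.

Lemma ballE (x : H) r y : ball x r y = (`|x - y| < r).
Proof. by rewrite -ball_normE. Qed.
Lemma ballER (x : R) r y : ball x r y = (`|x - y| < r).
Proof. by rewrite -ball_normE. Qed.

Lemma good_closure (m : probability (Borel H) R) Q (e : nat -> H) :
  (forall x eps, 0 < eps -> exists i, `|x - e i| < eps) ->
  (forall i j k l, good m Q e i j k l) ->
  forall x y, measure_support m x -> measure_support m y -> closure (SQ Q) (ip x y).
Proof.
move=> de hg x y Mx My; apply: closure_approx => eps eps0.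
have [l hl] := small_inv (eps / 2) (divr_gt0 eps0 (ltr0Sn _ 1)).
set t := (l.+1%:R)^-1 in hl.
have t0 : 0 < t by rewrite invr_gt0 ltr0Sn.
have [eta eta0 heta] := ip_cont x y (t / 2) (divr_gt0 t0 (ltr0Sn _ 1)).
have [k hk] := small_inv (eta / 2) (divr_gt0 eta0 (ltr0Sn _ 1)).
set rho := (k.+1%:R)^-1 in hk.
have rho0 : 0 < rho by rewrite invr_gt0 ltr0Sn.
have [i hi] := de x rho rho0; have [j hj] := de y rho rho0.
have near (z w : H) : `|z - w| < rho -> `|w - z| < eta.
  by rewrite distrC => h; lra.
have clos u v : `|e i - u| < rho -> `|e j - v| < rho -> `|ip u v - ip x y| < t / 2.
  move=> hu hv; apply: heta.
    have := ler_normD (u - e i) (e i - x); rewrite addrA subrK => h.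
    apply: (le_lt_trans h); rewrite distrC in hu; move: hi; rewrite distrC => hi; lra.
  have := ler_normD (v - e j) (e j - y); rewrite addrA subrK => h.
  apply: (le_lt_trans h); rewrite distrC in hv; move: hj; rewrite distrC => hj; lra.
have hab : `|ip (e i) (e j) - ip x y| < t / 2.
  by apply: clos; rewrite subrr normr0.
have pos (z w : H) : measure_support m z -> `|w - z| < rho -> (0 < m (ball w rho))%E.
  by move=> Mz wz; apply: Mz; [exact: ball_open | rewrite ballE].
have incl : forall u v, ball (e i) rho u -> ball (e j) rho v ->
    ball (ip (e i) (e j)) t (ip u v).
  move=> u v; rewrite ballER !ballE => hu hv.
  have h1 := clos u v hu hv.
  have := ler_normD (ip (e i) (e j) - ip x y) (ip x y - ip u v).
  rewrite addrA subrK => h; apply: (le_lt_trans h).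
  rewrite (distrC (ip x y)); move: hab h1; lra.
have p1 : (0 < m (ball (e i) rho))%E by apply: (pos x (e i) Mx); rewrite distrC.
have p2 : (0 < m (ball (e j) rho))%E by apply: (pos y (e j) My); rewrite distrC.
have [s [Ss hs]] := hg i j k l incl p1 p2.
exists s; split => //; move: hs; rewrite ballER => hs.
have := ler_normD (ip x y - ip (e i) (e j)) (ip (e i) (e j) - s).
rewrite addrA subrK => h; apply: (le_lt_trans h).
rewrite distrC in hab; move: hab hs hl; rewrite -/t; lra.
Qed.
End IP.
Section Integ.
Local Open Scope ereal_scope.
Context d (T : measurableType d) (R : realType).

Lemma le_int_nm (mu : {measure set T -> \bar R}) (D : set T) (f g : T -> \bar R) :
  (forall x, D x -> 0 <= f x) -> (forall x, D x -> f x <= g x) ->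
  \int[mu]_(x in D) f x <= \int[mu]_(x in D) g x.
Proof.
move=> f0 fg.
have g0 x : D x -> 0 <= g x by move=> Dx; exact: le_trans (f0 x Dx) (fg x Dx).
rewrite (ge0_integralE _ f0) (ge0_integralE _ g0).
apply: ge_ereal_sup => _ [h hf <-]; apply: ereal_sup_ubound; exists h => //= x.
apply: (le_trans (hf x)); rewrite /patch; case: ifP => // /set_mem Dx.
exact: fg.
Qed.
End Integ.

Section Iter.
Variables (R : realType) (H : completeNormedModType R).
Local Open Scope ereal_scope.

Lemma iter_intS (m : probability (Borel H) R) n g :
  iter_int m n.+1 g = \int[m]_(x in setT) iter_int m n (fun phi => g (cons_seq x phi)).
Proof. by []. Qed.

Lemma iter_int0 (m : probability (Borel H) R) n : iter_int m n (fun _ => 0) = 0.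
Proof.
elim: n => [//|n IH]; rewrite iter_intS IH; exact: integral0.
Qed.

Lemma iter_int_ge0 (m : probability (Borel H) R) n g :
  (forall phi, 0 <= g phi) -> 0 <= iter_int m n g.
Proof.
elim: n g => [|n IH] g g0 /=; first exact: g0.
by apply: integral_ge0 => x _; apply: IH.
Qed.

Lemma iter_int_le (m : probability (Borel H) R) n g1 g2 :
  (forall phi, 0 <= g1 phi) -> (forall phi, g1 phi <= g2 phi) ->
  iter_int m n g1 <= iter_int m n g2.
Proof.
elim: n g1 g2 => [|n IH] g1 g2 g0 g12 /=; first exact: g12.
apply: le_int_nm => x _; first exact: iter_int_ge0.
by apply: IH.
Qed.

Section Bound.
Variables (ip : H -> H -> R) (a b : H) (rho t : R).
Let U : set H := ball a rho.
Let V : set H := ball b rho.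
Let TT : set R := ball (ip a b) t.
Hypothesis incl : forall u v, U u -> V v -> TT (ip u v).

Definition condn (n : nat) : set (nat -> H) :=
  [set phi | forall k, (k < n)%N -> ~ TT (ip (phi k.*2) (phi k.*2.+1))].

Lemma condnS n x y phi :
  condn n.+1 (cons_seq x (cons_seq y phi)) <-> ~ TT (ip x y) /\ condn n phi.
Proof.
split.
  move=> h; split; first exact: (h 0%N).
  by move=> k kn; have := h k.+1 kn; rewrite /condn /=; idtac. 
move=> [hxy h] [|k] kn //=; exact: h.
Qed.

Lemma mU : measurable (U : set (Borel H)).
Proof. by apply: sub_sigma_algebra; exact: ball_open. Qed.
Lemma mV : measurable (V : set (Borel H)).
Proof. by apply: sub_sigma_algebra; exact: ball_open. Qed.

Lemma main_bound (m : probability (Borel H) R) (dl : R) :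
  (0 <= dl)%R -> dl%:E <= m U -> dl%:E <= m V ->
  forall n, iter_int m n.*2 (fun phi => (\1_(condn n) phi)%:E) <= ((1 - dl ^+ 2) ^+ n)%:E.
Proof.
move=> dl0 dU dV.
have [u Uu] : exists u, m U = u%:E.
  by exists (fine (m U)); rewrite fineK // fin_num_measure //; exact: mU.
have [v Vv] : exists v, m V = v%:E.
  by exists (fine (m V)); rewrite fineK // fin_num_measure //; exact: mV.
have u1 : (u <= 1)%R by rewrite -lee_fin -Uu; apply: probability_le1; exact: mU.
have v1 : (v <= 1)%R by rewrite -lee_fin -Vv; apply: probability_le1; exact: mV.
rewrite Uu lee_fin in dU; rewrite Vv lee_fin in dV.
elim=> [|n IH].
  by rewrite /= expr0 lee_fin indicE; case: (_ \in _); rewrite ?ler01.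
set K := ((1 - dl ^+ 2) ^+ n)%R in IH *.
have K0 : (0 <= K)%R by rewrite /K exprn_ge0 //; nra.
rewrite doubleS !iter_intS.
have inner : forall x y, iter_int m n.*2 (fun phi =>
    (\1_(condn n.+1) (cons_seq x (cons_seq y phi)))%:E) <=
    ((\1_(~` TT) (ip x y)) * K)%:E.
  move=> x y; case: (pselect (TT (ip x y))) => hT.
    rewrite (_ : (fun _ => _) = fun _ => 0).
      by rewrite iter_int0 indicE memNset ?mul0r // => /(_ hT).
    apply: funext => phi; rewrite indicE memNset //.
    by move=> /condnS [].
  rewrite (_ : (fun _ => _) = fun phi => (\1_(condn n) phi)%:E).
    by rewrite indicE mem_set // mul1r.
  apply: funext => phi; rewrite !indicE.
  suff -> : (cons_seq x (cons_seq y phi) \in condn n.+1) = (phi \in condn n) by [].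
  by apply/idP/idP => /set_mem h; apply/mem_set; [case/condnS: h | exact/condnS].
have mCV : measurable (~` V : set (Borel H)) by apply: measurableC; exact: mV.
have mCU : measurable (~` U : set (Borel H)) by apply: measurableC; exact: mU.
have step : forall x, iter_int m n.*2.+1
    (fun phi => (\1_(condn n.+1) (cons_seq x phi))%:E) <=
    ((K * (1 - dl)) * \1_U x + K * \1_(~` U) x)%:E.
  move=> x; rewrite iter_intS.
  apply: (@le_trans _ _ (\int[m]_(y in setT) ((\1_(~` TT) (ip x y)) * K)%:E)).
    apply: le_int_nm => y _; first by apply: iter_int_ge0 => phi; rewrite lee_fin.
    exact: inner.
  case: (pselect (U x)) => hU.
    rewrite indicE mem_set // indicE memNset; last by move=> /(_ hU).
    rewrite mulr1 mulr0 addr0.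
    apply: (@le_trans _ _ (\int[m]_(y in setT) (K * \1_(~` V) y)%:E)).
      apply: le_int_nm => y _; first by rewrite lee_fin mulr_ge0.
      rewrite lee_fin mulrC; apply: ler_wpM2l => //.
      case: (pselect (V y)) => hV.
        by rewrite indicE memNset // => /(_ (incl _ _ hU hV)).
      by rewrite [X in (_ <= X)%R]indicE mem_set // indicE; case: (_ \in _).
    rewrite (@integralZl_indic _ _ _ m setT measurableT (fun _ => ~` V)) //; last first.
      by move=> Kn; have := lt_le_trans Kn K0; rewrite ltxx.
    rewrite integral_indic // setIT.
    apply: (@le_trans _ _ (K%:E * (1 - m V))).
      by rewrite le_eqVlt; apply/orP; left; apply/eqP; apply: congr1; exact: (probability_setC m mV).
    rewrite Vv -EFinB -EFinM lee_fin; apply: ler_wpM2l => //; lra.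
  rewrite indicE memNset // indicE mem_set // mulr0 add0r mulr1.
  apply: (@le_trans _ _ (\int[m]_(y in setT) (cst K%:E) y)).
    apply: le_int_nm => y _; first by rewrite lee_fin mulr_ge0.
    rewrite /= lee_fin -[X in (_ <= X)%R]mul1r; apply: ler_wpM2r => //.
  rewrite integral_cst // le_eqVlt; apply/orP; left; apply/eqP.
  by rewrite -[RHS]mule1; apply: congr1; exact: probability_setT.
apply: (@le_trans _ _ (\int[m]_(x in setT)
    ((K * (1 - dl)) * \1_U x + K * \1_(~` U) x)%:E)).
  apply: le_int_nm => x _; last exact: step.
  by apply: iter_int_ge0 => phi; rewrite lee_fin.
have K1 : (0 <= K * (1 - dl))%R by apply: mulr_ge0 => //; nra.
under eq_integral do rewrite EFinD.
have mi1 : measurable_fun [set: Borel H] (\1_U : H -> R) by apply: measurable_indic; exact: mU.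
have mi2 : measurable_fun [set: Borel H] (\1_(~` U) : H -> R) by apply: measurable_indic; exact: mCU.
rewrite ge0_integralD //. all: try (by move=> x _; rewrite lee_fin mulr_ge0). all: try (by apply/measurable_EFinP; apply: measurable_funM => //; exact: measurable_cst).
rewrite (@integralZl_indic _ _ _ m setT measurableT (fun _ => U)) //; last first.
  all: try (by move=> Kn; have := lt_le_trans Kn K1; rewrite ltxx).
  all: try exact: mU.
rewrite (@integralZl_indic _ _ _ m setT measurableT (fun _ => ~` U)) //; last first.
  all: try (by move=> Kn; have := lt_le_trans Kn K0; rewrite ltxx).
  all: try exact: mCU.
rewrite integral_indic; last exact: mU.
rewrite integral_indic; last exact: mCU.
rewrite !setIT.
apply: (@le_trans _ _ (((K * (1 - dl)) * u + K * (1 - u))%:E)).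
  rewrite le_eqVlt; apply/orP; left; apply/eqP.
  rewrite EFinD !EFinM EFinB -Uu.
  f_equal; apply: congr1; rewrite EFinB -Uu; exact: (probability_setC m mU).
rewrite lee_fin exprS.
rewrite /K; set L := ((1 - dl ^+ 2) ^+ n)%R.
have L0 : (0 <= L)%R by [].
have h1 : (0 <= dl * (u - dl))%R by apply: mulr_ge0 => //; lra.
have h2 : (0 <= L * (dl * (u - dl)))%R by apply: mulr_ge0.
move: h2; rewrite /L; set L2 := ((1 - dl ^+ 2) ^+ n)%R => h2.
have -> : ((1 - dl ^+ 2) * L2 = L2 - L2 * dl * dl)%R by ring.
have -> : (L2 * (1 - dl) * u + L2 * (1 - u) = L2 - L2 * dl * u)%R by ring.
move: h2; have -> : (L2 * (dl * (u - dl)) = L2 * dl * u - L2 * dl * dl)%R by ring.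
move=> h2.
lra.
all: exact: measurableT.
Qed.
End Bound.
End Iter.

Lemma geo_zero (R : realType) (x : \bar R) (r : R) :
  (0 <= x)%E -> 0 <= r -> r < 1 -> (forall n, (x <= (r ^+ n)%:E)%E) -> x = 0%E.
Proof.
move=> x0 r0 r1 h.
have x1 := h 0%N; rewrite expr0 in x1.
have [c xc] : exists c, x = c%:E.
  exists (fine x); rewrite fineK // fin_numE.
  by apply/andP; split; apply/negP => /eqP xe; move: x0 x1; rewrite xe.
move: x0 h; rewrite xc lee_fin => c0 h; congr (_%:E).
apply/eqP; rewrite eq_le c0 andbT leNgt; apply/negP => cp.
have cv : (GRing.exp r : R ^nat) @ \oo --> 0 by apply: cvg_expr; rewrite ger0_norm.
have [N _ hN] := cvgr0_norm_lt _ cv c cp.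
have := hN N (leqnn N); rewrite /= ger0_norm ?exprn_ge0 // => hl.
by have := h N; rewrite lee_fin => hc; move: (le_lt_trans hc hl); rewrite ltxx.
Qed.

Lemma dense_seq (R : realType) (H : completeNormedModType R) :
  separable H -> exists e : nat -> H, forall x eps, 0 < eps -> exists i, `|x - e i| < eps.
Proof.
move=> [D [cD clD]]; have /countable_injP [f finj] := cD.
exists (fun i => xget 0 [set x | D x /\ f x = i]) => x eps e0.
have : closure D x by rewrite clD.
move=> /(_ (ball x eps)) []; first by apply: nbhsx_ballx.
move=> d [Dd xd]; exists (f d).
have : (fun x0 => D x0 /\ f x0 = f d) (xget 0 [set x | D x /\ f x = f d]).
  by apply: (@xgetPex _ 0 [set x | D x /\ f x = f d]); exists d.
move=> [Dd' fd']; have -> : xget 0 [set x | D x /\ f x = f d] = d.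
  by apply: finj => //; apply/mem_set.
by rewrite -ballE.
Qed.

Lemma interI (T : pointedType) (G : set (set T)) (A B : set T) :
  <<s G >> A -> <<s G >> B -> <<s G >> (A `&` B).
Proof. by move=> hA hB; exact: (@measurableI _ (g_sigma_algebraType G) A B). Qed.

Section GoodAE.
Variables (R : realType) (d : measure_display) (Om : measurableType d)
  (P : probability Om R) (X : Om -> ConfM R)
  (H : completeNormedModType R) (ip : H -> H -> R)
  (nu : Om -> probability (Borel H) R).
Hypothesis mX : measurable_fun setT X.
Hypothesis mnu : forall A : set (Borel H), measurable A -> measurable_fun setT (fun w => nu w A).
Hypothesis dir : directs ip P nu X.
Variables (a b : H) (rho t : R).
Hypothesis incl : forall u v, ball a rho u -> ball b rho v -> ball (ip a b) t (ip u v).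

Let U : set H := ball a rho.
Let V : set H := ball b rho.
Let TT : set R := ball (ip a b) t.
Let Bs (i j : nat) : set R := if odd j && (i == j.-1) then ~` TT else setT.

Let E (p : nat) : set Om :=
  [set w | ((p.+1%:R^-1)%:E < nu w U)%E] `&` [set w | ((p.+1%:R^-1)%:E < nu w V)%E].
Let C (n : nat) : set Om :=
  [set w | forall i j, (i < n.*2)%N -> (j < n.*2)%N -> Bs i j ((X w).2 i j)].

Lemma mEp p : measurable (E p).
Proof.
apply: measurableI.
  rewrite -[X in measurable X]setTI.
  have -> : [set w | ((p.+1%:R^-1)%:E < nu w U)%E] =
     (fun w => nu w U) @^-1` [set` Interval (BRight (p.+1%:R^-1)%:E) (BRight +oo%E)].
    by apply/seteqP; split => w /=; rewrite in_itv /= leey andbT.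
  have mU : measurable (U : set (Borel H)) by apply: sub_sigma_algebra; exact: ball_open.
  exact: (mnu U mU measurableT _ (emeasurable_itv _)).
rewrite -[X in measurable X]setTI.
have -> : [set w | ((p.+1%:R^-1)%:E < nu w V)%E] =
   (fun w => nu w V) @^-1` [set` Interval (BRight (p.+1%:R^-1)%:E) (BRight +oo%E)].
  by apply/seteqP; split => w /=; rewrite in_itv /= leey andbT.
have mV : measurable (V : set (Borel H)) by apply: sub_sigma_algebra; exact: ball_open.
exact: (mnu V mV measurableT _ (emeasurable_itv _)).
Qed.

Lemma mCn n : measurable (C n).
Proof.
have -> : C n = X @^-1` (\bigcap_i \bigcap_j
    [set c : ConfM R | (i < n.*2)%N -> (j < n.*2)%N -> Bs i j (c.2 i j)]).
  apply/seteqP; split => w /=.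
    by move=> h i _ j _; exact: h.
  by move=> h i j hi hj; exact: (h i I j I hi hj).
rewrite -[X in measurable X]setTI; apply: mX => //.
apply: bigcapT_measurable => i; apply: bigcapT_measurable => j.
case: (boolP ((i < n.*2)%N && (j < n.*2)%N)) => [/andP[hi hj]|hn].
  have -> : [set c : ConfM R | (i < n.*2)%N -> (j < n.*2)%N -> Bs i j (c.2 i j)] =
      (fun c : ConfM R => c.2 i j) @^-1` (Bs i j).
    by apply/seteqP; split => c /=; [move=> h; exact: h | move=> h _ _].
  apply: sub_sigma_algebra; right; exists i, j, (Bs i j); split => //.
  rewrite /Bs; case: ifP => _; last exact: measurableT.
  by apply: measurableC; exact: measurable_ball.
have -> : [set c : ConfM R | (i < n.*2)%N -> (j < n.*2)%N -> Bs i j (c.2 i j)] = setT.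
  by apply/seteqP; split => c // _ hi hj; move: hn; rewrite hi hj.
exact: measurableT.
Qed.

Lemma mBs i j : measurable (Bs i j).
Proof.
rewrite /Bs; case: ifP => _; last exact: measurableT.
by apply: measurableC; exact: measurable_ball.
Qed.

Lemma gram_eq (m : probability (Borel H) R) n :
  gram_box_prob ip m n.*2 Bs = iter_int m n.*2 (fun phi => (\1_(condn R H ip a b t n) phi)%:E).
Proof.
rewrite /gram_box_prob.
suff -> : [set phi' : nat -> H | forall i j, (i < n.*2)%N -> (j < n.*2)%N ->
     Bs i j (gram_entry ip phi' i j)] = condn R H ip a b t n by [].
apply/seteqP; split => phi /= h.
  move=> k kn; have := h k.*2 k.*2.+1.
  rewrite /Bs /gram_entry /= odd_double /= eqxx /=.
  have -> : (k.*2 == k.*2.+1) = false by rewrite eqn_leq ltnn andbF.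
  rewrite addr0; apply.
    by rewrite ltn_double.
  by rewrite ltn_Sdouble.
move=> i j hi hj; rewrite /Bs; case: ifP => [/andP[oj /eqP ij]|_] //.
have ej : j = (j./2).*2.+1 by rewrite -[LHS]odd_double_half oj.
have ei : i = (j./2).*2 by rewrite ij {1}ej.
have kn : (j./2 < n)%N by rewrite -ltn_Sdouble -ej.
rewrite /gram_entry.
have -> : (i == j) = false by rewrite ei {2}ej eqn_leq ltnn andbF.
rewrite addr0; move: ei ej kn; set k := j./2 => ei ej kn; rewrite ei ej; exact: h.
Qed.

Lemma boundp p n :
  (P (E p `&` C n) <= (((1 - (p.+1%:R^-1) ^+ 2) ^+ n)%:E))%E.
Proof.
have dl0 : (0 <= p.+1%:R^-1 :> R) by rewrite invr_ge0.
set dl := (p.+1%:R^-1 : R) in dl0 *.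
have r0 : (0 <= (1 - dl ^+ 2) ^+ n :> R).
  apply: exprn_ge0; have : dl <= 1 by rewrite /dl invf_le1 ?ler1n ?ltr0Sn.
  move=> h; nra.
rewrite dir; last 2 first.
- exact: mBs.
- apply: interI.
    apply: sub_sigma_algebra; exists U.
      by apply: sub_sigma_algebra; exact: ball_open.
    exists [set` Interval (BRight dl%:E) (BRight +oo%E)]; first exact: emeasurable_itv.
    by apply/seteqP; split => w /=; rewrite in_itv /= leey andbT.
  apply: sub_sigma_algebra; exists V.
    by apply: sub_sigma_algebra; exact: ball_open.
  exists [set` Interval (BRight dl%:E) (BRight +oo%E)]; first exact: emeasurable_itv.
  by apply/seteqP; split => w /=; rewrite in_itv /= leey andbT.
apply: (@le_trans _ _ (\int[P]_(w in E p) (cst ((1 - dl ^+ 2) ^+ n)%:E) w)%E).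
  apply: le_int_nm => w Ew.
    by rewrite /gram_box_prob; apply: iter_int_ge0 => phi; rewrite lee_fin.
  rewrite gram_eq; case: Ew => hU hV.
  by apply: main_bound => //; [exact: incl | exact: ltW | exact: ltW].
rewrite integral_cst; last exact: mEp.
rewrite -[X in (_ <= X)%E]mule1; apply: lee_wpmul2l; first by rewrite lee_fin.
exact: probability_le1 (mEp p).
Qed.

Lemma good_ae_incl : \forall w \ae P, (0 < nu w (ball a rho))%E ->
  (0 < nu w (ball b rho))%E -> exists s, SQ (X w).2 s /\ ball (ip a b) t s.
Proof.
pose M p := \bigcap_n (E p `&` C n).
have mM p : measurable (M p).
  by apply: bigcapT_measurable => n; apply: measurableI; [exact: mEp | exact: mCn].
have PM p : P (M p) = 0%E.
  have dl0 : (0 <= p.+1%:R^-1 :> R) by rewrite invr_ge0.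
  have dl1 : (p.+1%:R^-1 <= 1 :> R) by rewrite invf_le1 ?ler1n ?ltr0Sn.
  have dlp : (0 < p.+1%:R^-1 :> R) by rewrite invr_gt0 ltr0Sn.
  move: dl0 dl1 dlp (boundp p); set dl := (p.+1%:R^-1 : R) => dl0 dl1 dlp bp.
  apply: (@geo_zero _ _ (1 - dl ^+ 2)); first exact: measure_ge0.
  - by nra.
  - by nra.
  move=> n; apply: le_trans (bp n); apply: le_measure; rewrite ?inE.
  - exact: mM.
  - by apply: measurableI; [exact: mEp | exact: mCn].
  - by move=> w /(_ n I).
have mUb : measurable (U : set (Borel H)) by apply: sub_sigma_algebra; exact: ball_open.
have mVb : measurable (V : set (Borel H)) by apply: sub_sigma_algebra; exact: ball_open.
apply: (@negligibleS _ _ _ P (\bigcup_p M p)); last first.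
  by apply: negligible_bigcup => p; apply/negligibleP; [exact: mM | exact: PM].
move=> w /= /not_implyP [hU /not_implyP [hV hS]].
have [u Uu] : exists u, nu w U = u%:E.
  by exists (fine (nu w U)); rewrite fineK // fin_num_measure.
have [v Vv] : exists v, nu w V = v%:E.
  by exists (fine (nu w V)); rewrite fineK // fin_num_measure.
rewrite -/U Uu lte_fin in hU; rewrite -/V Vv lte_fin in hV.
have hm : 0 < Num.min u v by rewrite lt_min hU hV.
have [p hp] := small_inv R (Num.min u v) hm.
exists p => // n _; split.
  rewrite /E /= Uu Vv !lte_fin; move: hp; rewrite lt_min => /andP[] -> ->.
  by [].
move=> i j _ _; rewrite /Bs; case: ifP => [/andP[oj /eqP ij]|_] // hT.
apply: hS; exists ((X w).2 i j); split => //; exists i, j; split => //.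
clear hT; move=> eij; case: j oj ij eij => // j _ /= ij eij; move: ij; rewrite eij => /eqP; by rewrite eqn_leq ltnn.
Qed.
End GoodAE.

Theorem lemma4p2 (R : realType) (d : measure_display) (Om : measurableType d)
  (P : probability Om R) (mu : probability (ConfM R) R) (X : Om -> ConfM R)
  (H : completeNormedModType R) (ip : H -> H -> R)
  (nu : Om -> probability (Borel H) R) :
  measurable_fun setT X ->
  (forall w, rost_valid (X w)) ->
  (forall B : set (ConfM R), measurable B -> P (X @^-1` B) = mu B) ->
  RQSE mu ->
  {ae P, forall w, no_limit_from_below (closure (SQ (X w).2))} ->
  is_inner_product ip -> separable H ->
  (forall A : set (Borel H), measurable A -> measurable_fun setT (fun w => nu w A)) ->
  directs ip P nu X ->
  {ae P, forall w, countable (measure_support (nu w))}.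
Proof.
move=> mX _ _ _ nlae hip sepH mnu dir.
have [e de] := dense_seq R H sepH.
have gae : forall i j k l, \forall w \ae P, good R H ip (nu w) (X w).2 e i j k l.
  move=> i j k l.
  case: (pselect (forall u v, ball (e i) (k.+1%:R^-1) u -> ball (e j) (k.+1%:R^-1) v ->
      ball (ip (e i) (e j)) (l.+1%:R^-1) (ip u v))) => hinc.
    apply: filterS (@good_ae_incl R d Om P X H ip nu mX mnu dir (e i) (e j) _ _ hinc).
    by move=> w hw _; exact: hw.
  by apply: aeW => w hinc'; exfalso.
have gall : \forall w \ae P, forall i j k l, good R H ip (nu w) (X w).2 e i j k l.
  apply: ae_foralln => i; apply: ae_foralln => j; apply: ae_foralln => k.
  apply: ae_foralln => l; exact: gae.
apply: filterS2 gall nlae => w hg hnl.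
exact: (@det R H ip hip (nu w) _ e de (@good_closure R H ip hip (nu w) _ e de hg) hnl).
Qed.
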